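(* Let $X$ be a finite set, $R>1$, $p\in(0,1]$, let $\pi$ be an $R$-spread probability measure on subsets of $X$, and set $\delta=(pR)^{-1/3}$. Let $\mathbb{P}_p$ be the planted model: $\mathbf{A}\sim\pi$, independently $\mathbf{V}\sim\mathbb{Q}_p$, and $\mathbf{Y}=\mathbf{A}\cup\mathbf{V}$. If \[ \mathbb{E}_{\mathbb{P}_p}\big(\mathcal{Z}_{\mathbf{Y}}(\mathbf{A},\delta)\big)\le 6\delta^2, \] then \[ \mathbb{E}_{\mathbb{P}_p}\bigg(\frac{\mathcal{Z}_{\mathbf{Y}}(\mathbf{A},\delta)}{\mathcal{Z}_{\mathbf{Y}}}\bigg)\le 6\delta . \]
   Context: A probability measure $\pi$ on subsets of $X$ is $R$-spread if for every $S\subseteq X$, $\pi(S\subseteq\mathbf{A})\le R^{-|S|}$ for $\mathbf{A}\sim\pi$. $\mathbb{Q}_p$ is the law of the random subset of $X$ containing each element independently with probability $p$. For $Y\subseteq X$ define $\mathcal{Z}_{Y}=\sum_{A'\subseteq X}\pi(A')\,\mathbf{1}\{A'\subseteq Y\}\,p^{-|A'|}$, and for $A\subseteq X$ define $\mathcal{Z}_{Y}(A,\delta)=\sum_{A'\subseteq X:\,|A\cap A'|>\delta|A|}\pi(A')\,\mathbf{1}\{A'\subseteq Y\}\,p^{-|A'|}$. *)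

(* Defs.v *)
From HB Require Import structures.
From mathcomp Require Import all_boot all_order all_algebra.
From mathcomp Require Import all_classical all_reals all_analysis.
Set Implicit Arguments. Unset Strict Implicit. Unset Printing Implicit Defensive.
Import Order.TTheory GRing.Theory Num.Theory.
Local Open Scope ring_scope.

Section Defs.
Variables (K : realType) (X : finType).

Definition is_prob (pi : {set X} -> K) : Prop :=
  (forall A, 0 <= pi A) /\ \sum_(A : {set X}) pi A = 1.

Definition spread (Rs : K) (pi : {set X} -> K) : Prop :=
  forall S : {set X}, \sum_(A : {set X} | S \subset A) pi A <= Rs ^- #|S|.

Definition Qp (p : K) (V : {set X}) : K := p ^+ #|V| * (1 - p) ^+ (#|X| - #|V|).

Definition ZY (pi : {set X} -> K) (p : K) (Y : {set X}) : K :=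
  \sum_(A' : {set X} | A' \subset Y) pi A' * p ^- #|A'|.

Definition ZYd (pi : {set X} -> K) (p : K) (Y A : {set X}) (delta : K) : K :=
  \sum_(A' : {set X} | (A' \subset Y) && (delta * #|A|%:R < #|A :&: A'|%:R))
     pi A' * p ^- #|A'|.

Definition planted_E (pi : {set X} -> K) (p : K) (f : {set X} -> {set X} -> K) : K :=
  \sum_(A : {set X}) \sum_(V : {set X}) pi A * Qp p V * f A (A :|: V).

End Defs.

(* Main.v *)
Require Import Defs.
From mathcomp Require Import all_boot all_order all_algebra.
From mathcomp Require Import all_classical all_reals all_analysis.
From mathcomp Require Import ring lra.
Import Order.TTheory GRing.Theory Num.Theory.
Local Open Scope ring_scope.

Section Aux.
Variables (K : realType) (X : finType).
Implicit Types (p : K) (A V y : {set X}).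

Definition qf p V (i : X) : K := if i \in V then p else 1 - p.

Lemma QpE p V : Qp p V = \prod_i qf p V i.
Proof.
rewrite /Qp (bigID (mem V)) /=.
rewrite (eq_bigr (fun=> p)); last by move=> i; rewrite /qf => ->.
rewrite [X in _ = _ * X](eq_bigr (fun=> 1 - p)); last by move=> i iV; rewrite /qf (negbTE iV).
rewrite prodr_const.
rewrite (prodr_const (fun i => ~~ (i \in V))).
congr (_ * _ ^+ _).
by rewrite -(cardC V) addKn; apply: eq_card => i; rewrite !inE.
Qed.

Lemma sumQ p : \sum_(V : {set X}) Qp p V = 1.
Proof.
have := @bigA_distr K 0 1 (@GRing.mul K) (@GRing.add K) X (fun=> p) (fun=> 1 - p).
rewrite (eq_bigr (fun=> 1)); last by move=> i _ /=; rewrite addrC subrK.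
rewrite big1_eq => ->; apply: eq_bigr => V _; by rewrite QpE.
Qed.

Lemma L2 p A y : p != 0 ->
  \sum_(V : {set X}) (A :|: V == y)%:R * Qp p V = (A \subset y)%:R * (p ^- #|A| * Qp p y).
Proof.
move=> p0.
have := @bigA_distr K 0 1 (@GRing.mul K) (@GRing.add K) X
  (fun i => p * (i \in y)%:R) (fun i => (1 - p) * ((i \in y) == (i \in A))%:R).
move=> E.
transitivity (\prod_i (p * (i \in y)%:R + (1 - p) * ((i \in y) == (i \in A))%:R)).
  rewrite E; apply: eq_bigr => V _; rewrite QpE.
  have -> : (A :|: V == y)%:R = \prod_i (((i \in A) || (i \in V)) == (i \in y))%:R :> K.
    case: eqP => [<-|/eqP ne].
      by rewrite big1 // => i _; rewrite inE eqxx.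
    have [i Hi] : exists i, ((i \in A) || (i \in V)) != (i \in y).
      apply/existsP; move: ne; apply: contraR; rewrite negb_exists => /forallP H.
      by apply/eqP/setP => i; rewrite inE; apply/eqP; move: (H i); rewrite negbK.
    by rewrite (bigD1 i) //= (negbTE Hi) mul0r.
  rewrite -big_split /=; apply: eq_bigr => i _; rewrite /qf.
  by case: (i \in V); case: (i \in A); case: (i \in y); rewrite /= ?mulr1 ?mulr0 ?mul1r ?mul0r.
rewrite QpE.
case: (boolP (A \subset y)) => Ay; last first.
  have [i /andP [iA iy]] : exists i, (i \in A) && (i \notin y).
    apply/existsP; move: Ay; apply: contraR; rewrite negb_exists => /forallP H.
    by apply/fintype.subsetP => i iA; move: (H i); rewrite iA /= negbK.
  rewrite mul0r (bigD1 i) //= (negbTE iy) iA /= !mulr0 addr0 mul0r //.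
rewrite mul1r (bigID (mem A)) [in RHS](bigID (mem A)) /=.
rewrite (eq_bigr (fun=> 1)); last first.
  by move=> i iA; rewrite iA (fintype.subsetP Ay i iA) /= mulr1 mulr1 addrC subrK.
rewrite [in RHS](eq_bigr (fun=> p)); last first.
  by move=> i iA; rewrite /qf (fintype.subsetP Ay i iA).
rewrite big1_eq mul1r prodr_const mulrA mulVf ?mul1r ?expf_neq0 //.
apply: eq_bigr => i /negbTE iA; rewrite iA /qf.
by case: (i \in y); rewrite /= ?mulr1 ?mulr0 ?addr0 ?add0r.
Qed.

Lemma L1 p A (G : {set X} -> K) : p != 0 ->
  \sum_(V : {set X}) Qp p V * G (A :|: V) = \sum_(y : {set X}) (A \subset y)%:R * (p ^- #|A| * Qp p y) * G y.
Proof.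
move=> p0.
under [RHS]eq_bigr => y _ do rewrite -L2 // big_distrl /=.
rewrite exchange_big /=; apply: eq_bigr => V _.
rewrite (bigD1 (A :|: V)) //= eqxx mul1r big1 ?addr0 // => y /negbTE.
by rewrite eq_sym => ->; rewrite !mul0r.
Qed.

End Aux.

Theorem lemma4 (K : realType) (X : finType) (Rs p : K) (pi : {set X} -> K) :
  1 < Rs -> 0 < p -> p <= 1 ->
  is_prob pi -> spread Rs pi ->
  let delta := (p * Rs) `^ (- (1 / 3)) in
  planted_E pi p (fun A Y => ZYd pi p Y A delta) <= 6 * delta ^+ 2 ->
  planted_E pi p (fun A Y => ZYd pi p Y A delta / ZY pi p Y) <= 6 * delta.
Proof.
move=> Rs1 p0 p1 [pi0 pisum] _ delta H.
have d0 : 0 < delta by apply: powR_gt0; apply: mulr_gt0 => //; apply: lt_trans Rs1.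
set t := 3 * delta.
have t0 : 0 < t by rewrite /t mulr_gt0.
have pn0 : p != 0 by rewrite gt_eqF.
have Q0 : forall V : {set X}, 0 <= Qp p V.
  by move=> V; rewrite /Qp mulr_ge0 // exprn_ge0 // ?subr_ge0 // ltW.
have pw0 : forall k, 0 <= p ^- k by move=> k; rewrite invr_ge0 exprn_ge0 // ltW.
have Z0 : forall y : {set X}, 0 <= ZY pi p y by move=> y; apply: sumr_ge0 => A _; rewrite mulr_ge0.
have D0 : forall y A : {set X}, 0 <= ZYd pi p y A delta.
  by move=> y A; apply: sumr_ge0 => B _; rewrite mulr_ge0.
have DZ : forall y A : {set X}, ZYd pi p y A delta <= ZY pi p y.
  move=> y A; rewrite /ZYd /ZY [X in _ <= X](bigID (fun A' => delta * #|A|%:R < #|A :&: A'|%:R)) /=.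
  by rewrite lerDl sumr_ge0 // => B _; rewrite mulr_ge0.
have pt : forall A Y : {set X}, ZYd pi p Y A delta / ZY pi p Y <=
     (ZY pi p Y < t)%R%:R + ZYd pi p Y A delta / t.
  move=> A Y; have := D0 Y A; have := DZ Y A; have := Z0 Y.
  set d := ZYd _ _ _ _ _; set z := ZY _ _ _ => z0 dz d0'.
  have dt0 : 0 <= d / t by rewrite divr_ge0 // ltW.
  case: (ltP z t) => hz /=.
    apply: le_trans (_ : 1 <= _); last by rewrite lerDl.
    have [->|zn0] := eqVneq z 0; first by rewrite invr0 mulr0.
    have zp : 0 < z by rewrite lt_neqAle eq_sym zn0.
    by rewrite ler_pdivrMr // mul1r.
  rewrite add0r ler_pdivrMr ?(lt_le_trans t0) //.
  apply: le_trans (_ : d / t * t <= _); first by rewrite divfK // gt_eqF.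
  by rewrite ler_wpM2l.
have lin : planted_E pi p (fun A Y => ZYd pi p Y A delta / ZY pi p Y) <=
    planted_E pi p (fun A Y => (ZY pi p Y < t)%R%:R) +
    planted_E pi p (fun A Y => ZYd pi p Y A delta) / t.
  rewrite /planted_E mulr_suml -big_split /=; apply: ler_sum => A _.
  rewrite mulr_suml -big_split /=; apply: ler_sum => V _.
  apply: le_trans (ler_wpM2l (mulr_ge0 (pi0 A) (Q0 V)) (pt A (A :|: V))) _; by rewrite mulrDr !mulrA.
have ind : planted_E pi p (fun A Y => (ZY pi p Y < t)%R%:R) <= t.
  rewrite /planted_E.
  under eq_bigr => A _ do (under eq_bigr => V _ do rewrite -mulrA; rewrite -big_distrr /= (@L1 K X p A (fun Y => (ZY pi p Y < t)%R%:R)) //).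
  under eq_bigr => A _ do rewrite big_distrr /=.
  rewrite exchange_big /=.
  have E : forall y : {set X}, \sum_(A : {set X}) pi A * ((A \subset y)%:R * (p ^- #|A| * Qp p y) * (ZY pi p y < t)%R%:R)
      = Qp p y * (ZY pi p y < t)%R%:R * ZY pi p y.
    move=> y; rewrite /ZY big_distrr [RHS]big_mkcond /=; apply: eq_bigr => A _.
    by case: (A \subset y); rewrite /= ?mul0r ?mulr0 ?mul1r //; ring.
  under eq_bigr => y _ do rewrite E.
  apply: le_trans (_ : \sum_(y : {set X}) Qp p y * t <= _).
    apply: ler_sum => y _; case: (ltP (ZY pi p y) t) => h /=.
      by rewrite mulr1 ler_wpM2l // ltW.
    by rewrite mulr0 mul0r mulr_ge0 // ltW.
  by rewrite -mulr_suml sumQ mul1r.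
apply: (le_trans lin).
have : planted_E pi p (fun A Y => ZYd pi p Y A delta) / t <= 2 * delta.
  rewrite ler_pdivrMr // /t.
  apply: (le_trans H); rewrite expr2; nra.
move: ind; rewrite /t; lra.
Qed.
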